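(* Let $A\in\mathbb{R}^{m\times n}$, and let $p:[0,\infty)\to\mathbb{R}$ be concave, increasing and continuous with right derivative $p'(0+)>0$. For $x\in\mathbb{R}^n$ define $R(x)\in\mathbb{R}^n$ by $$R(x)_i=\mathrm{sgn}(x_i)\Big(1-\frac{d_i(x)}{p'(0+)}\Big),$$ where $d_i(x)=p'(0+)$ if $x_i=0$, and, if $x_i\neq0$, $d_i(x)$ is any element of the superdifferential $[p'_+(|x_i|),p'_-(|x_i|)]$ of the concave function $p$ at $|x_i|$ (one-sided derivatives). Given $\bar x\in\mathbb{R}^n$, consider the iteration $x^{(0)}=\mathbf{0}$ and $$x^{(k+1)}\in\arg\min_{x\in\mathbb{R}^n}\ \|x\|_1-\langle R(x^{(k)}),x\rangle\quad\text{s.t.}\quad Ax=A\bar x,\qquad k=0,1,2,\dots$$ Let $T\subseteq\{1,\dots,n\}$ be a fixed index set. Suppose that basis pursuit uniquely recovers every vector supported on $T$, i.e. for every $\bar x$ with $\{i:\bar x_i\neq0\}\subseteq T$, $\bar x$ is the unique solution of $\min_x\|x\|_1$ s.t. $Ax=A\bar x$. Then the iteration above also recovers every such $\bar x$: for every $\bar x$ supported on $T$ and every $k\ge 0$, the minimization problem defining $x^{(k+1)}$ has $\bar x$ as its unique solution, so $x^{(k)}=\bar x$ for all $k\ge1$.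
   Context: $\mathrm{sgn}(t)=t/|t|$ for $t\neq0$ and $\mathrm{sgn}(0)=0$. A vector is supported on $T$ if all its nonzero entries have indices in $T$. (When $x^{(0)}=\mathbf{0}$, $R(x^{(0)})=\mathbf{0}$, so the first step is basis pursuit.) *)

(* Defs.v *)
From HB Require Import structures.
From mathcomp Require Import all_boot all_order all_algebra.
From mathcomp Require Import all_classical all_reals all_analysis.
Set Implicit Arguments. Unset Strict Implicit. Unset Printing Implicit Defensive.
Import Order.TTheory GRing.Theory Num.Theory.
Import numFieldNormedType.Exports.
Local Open Scope classical_set_scope.
Local Open Scope ring_scope.

Section Defs.
Variable R : realType.

Definition concave_on_nonneg (p : R -> R) : Prop :=
  forall x y l : R, 0 <= x -> 0 <= y -> 0 <= l <= 1 ->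
    l * p x + (1 - l) * p y <= p (l * x + (1 - l) * y).

Definition increasing_on_nonneg (p : R -> R) : Prop :=
  forall x y : R, 0 <= x -> x <= y -> p x <= p y.

Definition right_deriv (p : R -> R) (t l : R) : Prop :=
  (fun h : R => (p (t + h) - p t) / h) @ 0^'+ --> l.

Definition left_deriv (p : R -> R) (t l : R) : Prop :=
  (fun h : R => (p (t + h) - p t) / h) @ 0^'- --> l.

Definition in_superdiff (p : R -> R) (t d : R) : Prop :=
  exists lr ll : R, [/\ right_deriv p t lr, left_deriv p t ll & lr <= d <= ll].

Definition admissible_d n (p : R -> R) (p0 : R) (x d : 'cV[R]_n) : Prop :=
  forall i : 'I_n,
    (x i 0 = 0 -> d i 0 = p0) /\ (x i 0 != 0 -> in_superdiff p `|x i 0| (d i 0)).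

Definition Rmap n (p0 : R) (x d : 'cV[R]_n) : 'cV[R]_n :=
  \col_i (Num.sg (x i 0) * (1 - d i 0 / p0)).

Definition l1norm n (x : 'cV[R]_n) : R := \sum_i `|x i 0|.

Definition inner n (u v : 'cV[R]_n) : R := \sum_i u i 0 * v i 0.

Definition supported_on n (x : 'cV[R]_n) (T : {set 'I_n}) : Prop :=
  forall i : 'I_n, x i 0 != 0 -> i \in T.

Definition is_minimizer n (f : 'cV[R]_n -> R) (C : 'cV[R]_n -> Prop) z : Prop :=
  C z /\ forall y, C y -> f z <= f y.

Definition is_unique_minimizer n (f : 'cV[R]_n -> R) (C : 'cV[R]_n -> Prop) z : Prop :=
  is_minimizer f C z /\ forall y, is_minimizer f C y -> y = z.

End Defs.

(* Main.v *)
Require Import Defs.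
From HB Require Import structures.
From mathcomp Require Import all_boot all_order all_algebra.
From mathcomp Require Import all_classical all_reals all_analysis.
From mathcomp Require Import ring lra.
Import Order.TTheory GRing.Theory Num.Theory.
Import numFieldNormedType.Exports.
Local Open Scope classical_set_scope.
Local Open Scope ring_scope.

Section H.
Variable R : realType.

Lemma conc_mul {p : R -> R} : concave_on_nonneg p -> forall {u v : R}, 0 <= u -> u <= v -> 0 < v ->
  (v - u) * p 0 + u * p v <= v * p u.
Proof.
move=> H u v u0 uv v0.
have l0 : 0 <= (v - u) / v by rewrite divr_ge0 // ?subr_ge0 // ltW.
have l1 : (v - u) / v <= 1 by rewrite ler_pdivrMr // mul1r; lra.
have := H 0 v ((v-u)/v) (lexx 0) (ltW v0) (introT andP (conj l0 l1)).
have vn : v != 0 by rewrite gt_eqF.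
have -> : (v - u) / v * 0 + (1 - (v - u) / v) * v = u by field.
move=> Hc; have := ler_wpM2r (ltW v0) Hc.
have -> : ((v - u) / v * p 0 + (1 - (v - u) / v) * p v) * v = (v - u) * p 0 + u * p v by field.
by rewrite [p u * v]mulrC.
Qed.

Lemma divle (x y z w : R) : 0 < y -> 0 < w -> x * w <= z * y -> x / y <= z / w.
Proof. move=> y0 w0 H; rewrite ler_pdivrMr // mulrAC ler_pdivlMr //. Qed.

Lemma lim_le {T : Type} {F : set_system T} {FF : ProperFilter F} {f : T -> R} {l c : R} :
  f @ F --> l -> (\forall t \near F, f t <= c) -> l <= c.
Proof.
move=> fl Fc; rewrite leNgt; apply/negP => cl.
have Fg := cvgr_gt _ fl _ cl.
have [t [/= a b]] := filter_ex (filterI Fc (Fg _)).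
lra.
Qed.

Lemma lim_ge {T : Type} {F : set_system T} {FF : ProperFilter F} {f : T -> R} {l c : R} :
  f @ F --> l -> (\forall t \near F, c <= f t) -> c <= l.
Proof.
move=> fl Fc; rewrite leNgt; apply/negP => cl.
have Fg := cvgr_lt _ fl _ cl.
have [t [/= a b]] := filter_ex (filterI Fc (Fg _)).
lra.
Qed.

Lemma superdiff_bounds (p : R -> R) p0 t d : concave_on_nonneg p -> increasing_on_nonneg p ->
  right_deriv p 0 p0 -> 0 < t -> in_superdiff p t d -> 0 <= d <= p0.
Proof.
move=> Hc Hi Hr t0 [lr [ll [Hlr Hll /andP[d1 d2]]]].
rewrite /right_deriv in Hr Hlr; rewrite /left_deriv in Hll.
have s1 : (p t - p 0) / t <= p0.
  apply: (lim_ge Hr); near=> s.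
  have s0 : 0 < s by near: s; exact: nbhs_right_gt.
  have st : s < t by near: s; exact: nbhs_right_lt.
  rewrite add0r; apply: divle => //.
  have := conc_mul Hc (ltW s0) (ltW st) t0; nra.
have s2 : ll <= (p t - p 0) / t.
  apply: (lim_le Hll); near=> h.
  have h0 : h < 0 by near: h; exact: nbhs_left_lt.
  have ht : - t < h by near: h; apply: nbhs_left_gt; lra.
  have -> : (p (t + h) - p t) / h = (p t - p (t + h)) / (- h) by rewrite invrN mulrN -mulNr opprB.
  apply: divle => //; first lra.
  have := conc_mul Hc (u := t + h) (v := t); nra.
have s3 : 0 <= lr.
  apply: (lim_ge Hlr); near=> h.
  have h0 : 0 < h by near: h; exact: nbhs_right_gt.
  apply: divr_ge0; last exact: ltW.
  by rewrite subr_ge0; apply: Hi; lra.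
apply/andP; split; lra.
Unshelve. all: by end_near.
Qed.

Lemma term_ineq (a y r : R) : `|r| <= 1 -> 0 <= r * a ->
  - `|y - a| <= `|y| - `|a| - r * (y - a).
Proof.
move=> /ler_normlP [r1 r2] ra.
have e1 := ler_norm y; have e3 := ler_norm (y - a).
have e4 : - (y - a) <= `|y - a| by rewrite -normrN ler_norm.
have e5 : - y <= `|y| by rewrite -normrN ler_norm.
case: (ltrgtP a 0) => ha.
- rewrite (ltr0_norm ha); have rn : r <= 0 by nra.
  have P1 : 0 <= (1 + r) * (`|y - a| - (y - a)) by apply: mulr_ge0; lra.
  have P2 : 0 <= (- r) * `|y - a| by apply: mulr_ge0; lra.
  nra.
- rewrite (gtr0_norm ha); have rn : 0 <= r by nra.
  have P1 : 0 <= (1 - r) * (`|y - a| + (y - a)) by apply: mulr_ge0; lra.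
  have P2 : 0 <= r * `|y - a| by apply: mulr_ge0; lra.
  nra.
- subst a; rewrite normr0 !subr0; nra.
Qed.

Lemma key m n (A : 'M[R]_(m,n)) (T : {set 'I_n}) (xb r : 'cV[R]_n) :
  (forall xb' : 'cV[R]_n, supported_on xb' T ->
     is_unique_minimizer (@l1norm R n) (fun x => A *m x = A *m xb') xb') ->
  supported_on xb T ->
  (forall i, `|r i 0| <= 1 /\ 0 <= r i 0 * xb i 0) ->
  (forall i, xb i 0 = 0 -> r i 0 = 0) ->
  is_unique_minimizer (fun z => l1norm z - inner r z) (fun z => A *m z = A *m xb) xb.
Proof.
move=> BP sxb hr hr0.
have strict : forall y, A *m y = A *m xb -> y != xb ->
    l1norm xb - inner r xb < l1norm y - inner r y.
  move=> y Ay yn.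
  pose v : 'cV[R]_n := \col_i (if i \in T then xb i 0 - y i 0 else 0).
  pose w : 'cV[R]_n := \col_i (if i \in T then 0 else y i 0 - xb i 0).
  have ewv : w = v + (y - xb).
    apply/matrixP => i j; rewrite (ord1 j) !mxE; case: ifP => _; lra.
  have Awv : A *m w = A *m v by rewrite ewv mulmxDr mulmxBr Ay subrr addr0.
  have sv : supported_on v T.
    by move=> i; rewrite mxE; case: ifP => // _; rewrite eqxx.
  have [[_ minv] uniqv] := BP v sv.
  have lvw : l1norm v < l1norm w.
    rewrite lt_neqAle (minv w Awv) andbT; apply/negP => /eqP evw.
    have wv : w = v.
      apply: uniqv; split => // y' Hy'; rewrite -evw; exact: minv.
    apply/negP: yn; rewrite negbK; apply/eqP/matrixP => i j; rewrite (ord1 j).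
    have := congr1 (fun M : 'cV[R]_n => M i 0) wv; rewrite !mxE; case: ifP => _; lra.
  rewrite -subr_gt0; apply: (lt_le_trans (_ : 0 < l1norm w - l1norm v)); first by rewrite subr_gt0.
  have -> : l1norm y - inner r y - (l1norm xb - inner r xb) =
      \sum_i (`|y i 0| - `|xb i 0| - r i 0 * (y i 0 - xb i 0)).
    rewrite /l1norm /inner !sumrB; under [X in _ = _ - X]eq_bigr do rewrite mulrBr.
    rewrite sumrB; lra.
  rewrite /l1norm -sumrB; apply: ler_sum => i _; rewrite !mxE.
  case: ifP => iT.
  - rewrite normr0 sub0r distrC; have [h1 h2] := hr i; exact: term_ineq.
  - have x0 : xb i 0 = 0 by apply/eqP; apply: contraFT iT => /sxb.
    rewrite (hr0 i x0) x0 normr0 subr0 mul0r !subr0; lra.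
split.
  split => // y Ay; have [->|yn] := eqVneq y xb; first by [].
  exact/ltW/strict.
move=> y [Ay my]; apply/eqP; apply/negP => yn.
have := strict y Ay (introT negP yn); have := my xb erefl; lra.
Qed.
End H.

Theorem theorem4p1 (R : realType) (m n : nat) (A : 'M[R]_(m, n))
    (p : R -> R) (p0 : R) (T : {set 'I_n}) :
  concave_on_nonneg p ->
  increasing_on_nonneg p ->
  {within `[0, +oo[, continuous p} ->
  right_deriv p 0 p0 -> 0 < p0 ->
  (* basis pursuit uniquely recovers every vector supported on T *)
  (forall xb : 'cV[R]_n, supported_on xb T ->
     is_unique_minimizer (@l1norm R n) (fun x => A *m x = A *m xb) xb) ->
  forall (xb : 'cV[R]_n), supported_on xb T ->
  forall (x : nat -> 'cV[R]_n) (d : nat -> 'cV[R]_n),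
    x 0%N = 0 ->
    (forall k, admissible_d p p0 (x k) (d k)) ->
    (forall k, is_minimizer
                 (fun z => l1norm z - inner (Rmap p0 (x k) (d k)) z)
                 (fun z => A *m z = A *m xb) (x k.+1)) ->
    forall k, is_unique_minimizer
                (fun z => l1norm z - inner (Rmap p0 (x k) (d k)) z)
                (fun z => A *m z = A *m xb) xb
              /\ x k.+1 = xb.
Proof.
move=> Hc Hi _ Hr p0pos BP xb sxb x d x0 Had Hmin.
have stepk : forall k, (x k = 0 \/ x k = xb) ->
    is_unique_minimizer (fun z => l1norm z - inner (Rmap p0 (x k) (d k)) z)
                (fun z => A *m z = A *m xb) xb.
  move=> k Pk; have K := @key R m n A T xb (Rmap p0 (x k) (d k)) BP sxb. apply: K.
  - move=> i; have [Hz Hnz] := Had k i; rewrite mxE.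
    case: Pk => Ek; rewrite Ek in Hz Hnz *.
      by rewrite mxE sgr0 mul0r normr0 mul0r; split => //; exact: ler01.
    have [xi|xi] := eqVneq (xb i 0) 0.
      by rewrite xi sgr0 !mul0r normr0; split => //; exact: ler01.
    have xp : 0 < `|xb i 0| by rewrite normr_gt0.
    have /andP[d0 dp] := @superdiff_bounds R p p0 _ _ Hc Hi Hr xp (Hnz xi).
    have c0 : 0 <= d k i 0 / p0 by rewrite divr_ge0 // ltW.
    have c1 : d k i 0 / p0 <= 1 by rewrite ler_pdivrMr // mul1r.
    split.
      by rewrite normrM normr_sg xi mul1r ger0_norm; lra.
    rewrite mulrAC -normrEsg mulrC; apply: mulr_ge0 => //; lra.
  - move=> i xi; rewrite mxE; case: Pk => ->; first by rewrite mxE sgr0 mul0r.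
    by rewrite xi sgr0 mul0r.
have P : forall k, x k = 0 \/ x k = xb.
  elim => [|k IH]; first by left.
  right; have [_ U] := stepk k IH; exact: U _ (Hmin k).
move=> k; split; first exact: stepk k (P k).
have [_ U] := stepk k (P k); exact: U _ (Hmin k).
Qed.
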